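(* Consider a power allocation game (PAG) as described in the context in which no country has friends ($\mathcal F_i=\emptyset$ for all $i$) and the adversary relations form a bipartite graph: there is a partition $\mathbf n=\mathcal L\cup\mathcal R$, $\mathcal L\cap\mathcal R=\emptyset$, such that whenever $j\in\mathcal A_i$, one of $i,j$ lies in $\mathcal L$ and the other in $\mathcal R$. Let $i\in\mathbf n$. If there exists a Nash equilibrium $U^*\in\mathcal U^*$ with $\sigma_i(U^* )>\tau_i(U^* )$ (country $i$ is safe), then for every $j\in\mathcal A_i$, $$p_j\ \le\ \sum_{k\in\mathcal A_j}p_k .$$
   Context: Power allocation game (PAG). There are $n$ countries labelled by $\mathbf n=\{1,\dots,n\}$; country $i$ has total power $p_i\ge 0$. Each country $i$ has a set of friends $\mathcal F_i\subseteq\mathbf n$ and a set of adversaries $\mathcal A_i\subseteq\mathbf n$; the sets $\{i\}$, $\mathcal F_i$, $\mathcal A_i$ are pairwise disjoint, and the relations are symmetric ($j\in\mathcal F_i\iff i\in\mathcal F_j$, $j\in\mathcal A_i\iff i\in\mathcal A_j$). An admissible power allocation matrix is a real $n\times n$ matrix $U=[u_{ij}]$ with $u_{ij}\ge0$, $u_{ij}=0$ whenever $j\notin\{i\}\cup\mathcal F_i\cup\mathcal A_i$, and $\sum_{j=1}^n u_{ij}=p_i$ for every $i$. Row $i$ is country $i$'s strategy: $u_{ii}$ is power kept in reserve, $u_{ij}$ ($j\in\mathcal F_i$) is support given to friend $j$, $u_{ij}$ ($j\in\mathcal A_i$) is offense against adversary $j$. $\mathcal U$ is the set of admissible matrices.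 The support of $i$ is $\sigma_i(U)=u_{ii}+\sum_{j\in\mathcal F_i}u_{ji}+\sum_{j\in\mathcal A_i}u_{ij}$ and the threat to $i$ is $\tau_i(U)=\sum_{j\in\mathcal A_i}u_{ji}$. The state $x_i(U)$ is ''safe'' if $\sigma_i(U)>\tau_i(U)$, ''precarious'' if $\sigma_i(U)=\tau_i(U)$, ''unsafe'' if $\sigma_i(U)<\tau_i(U)$; country $i$ survives at $U$ if it is safe or precarious. Preferences. For $U,V\in\mathcal U$, country $i$ weakly prefers $V$ to $U$ (written $U\preceq_i V$) iff (a) for all $j\in\{i\}\cup\mathcal F_i$: $x_j(V)\in\{\text{safe},\text{precarious}\}$ or $x_j(U)=\text{unsafe}$; and (b) for all $j\in\mathcal A_i$: $x_j(V)\in\{\text{unsafe},\text{precarious}\}$ or $x_j(U)=\text{safe}$. Country $i$ strictly prefers $V$ to $U$ (written $U\prec_i V$) iff either $i$ survives at $V$ and is unsafe at $U$ (priority of self-survival), or $U\preceq_i V$ holds and $V\preceq_i U$ fails. Nash equilibrium. $U^*\in\mathcal U$ is a (pure strategy) Nash equilibrium if no country has a profitable unilateral deviation: for every $i\in\mathbf n$ and every $V\in\mathcal U$ differing from $U^*$ only in row $i$, it is not the case that $U^*\prec_i V$. $\mathcal U^*$ denotes the set of Nash equilibria. *)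

(* Defs.v *)
From HB Require Import structures.
From mathcomp Require Import all_boot all_order all_algebra.
Set Implicit Arguments. Unset Strict Implicit. Unset Printing Implicit Defensive.
Import Order.TTheory GRing.Theory Num.Theory.
Local Open Scope ring_scope.

Section PAG.
Variables (R : realFieldType) (n : nat).
Variables (p : 'I_n -> R) (F A : rel 'I_n).

Definition wf_game : Prop :=
  [/\ forall i, ~~ F i i,
      forall i, ~~ A i i,
      forall i j, ~~ (F i j && A i j),
      forall i j, F i j = F j i
    & forall i j, A i j = A j i].

Definition admissible (U : 'M[R]_n) : Prop :=
  [/\ forall i j, 0 <= U i j,
      forall i j, ~~ [|| j == i, F i j | A i j] -> U i j = 0
    & forall i, \sum_(j < n) U i j = p i].

Definition sigma (U : 'M[R]_n) (i : 'I_n) : R :=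
  U i i + \sum_(j < n | F i j) U j i + \sum_(j < n | A i j) U i j.

Definition tau (U : 'M[R]_n) (i : 'I_n) : R :=
  \sum_(j < n | A i j) U j i.

Definition safe (U : 'M[R]_n) i : Prop := tau U i < sigma U i.
Definition precarious (U : 'M[R]_n) i : Prop := sigma U i = tau U i.
Definition unsafe (U : 'M[R]_n) i : Prop := sigma U i < tau U i.
Definition survives (U : 'M[R]_n) i : Prop := safe U i \/ precarious U i.

Definition weak_pref (i : 'I_n) (U V : 'M[R]_n) : Prop :=
  (forall j, (j == i) || F i j -> survives V j \/ unsafe U j) /\
  (forall j, A i j -> (unsafe V j \/ precarious V j) \/ safe U j).

Definition strict_pref (i : 'I_n) (U V : 'M[R]_n) : Prop :=
  (survives V i /\ unsafe U i) \/ (weak_pref i U V /\ ~ weak_pref i V U).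

Definition nash (U : 'M[R]_n) : Prop :=
  admissible U /\
  forall (i : 'I_n) (V : 'M[R]_n), admissible V ->
    (forall k j, k != i -> V k j = U k j) -> ~ strict_pref i U V.

End PAG.

(* Main.v *)
Require Import Defs.
From HB Require Import structures.
From mathcomp Require Import all_boot all_order all_algebra.
From mathcomp Require Import lra.
Import Order.TTheory GRing.Theory Num.Theory.
Local Open Scope ring_scope.

Section Aux.
Variables (R : realFieldType) (n : nat) (p : 'I_n -> R) (F A : rel 'I_n).

Lemma sigma_adm (U : 'M[R]_n) k : (forall i j, ~~ F i j) -> wf_game F A ->
  admissible p F A U -> sigma F A U k = p k.
Proof.
move=> nF [_ irrA _ _ _] [U0 Uz Us].
rewrite /sigma big_pred0; last by move=> l; rewrite (negbTE (nF _ _)).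
rewrite addr0 -Us.
have -> : \sum_(l < n) U k l =
  \sum_(l < n) ((if l == k then U k l else 0) + (if A k l then U k l else 0)).
  apply: eq_bigr => l _; case: (eqVneq l k) => [->|lk]; first by rewrite (negbTE (irrA k)) addr0.
  case: ifP => Akl; first by rewrite add0r.
  rewrite add0r; apply: Uz; by rewrite (negbTE lk) Akl (negbTE (nF _ _)).
by rewrite big_split /= -big_mkcond big_pred1_eq -big_mkcond.
Qed.

Lemma entry_le (U : 'M[R]_n) a b : admissible p F A U -> U a b <= p a.
Proof.
move=> [U0 Uz Us]; rewrite -Us (bigD1 b) //= lerDl sumr_ge0 //.
Qed.

Lemma tau_ge (U : 'M[R]_n) k l : admissible p F A U -> A k l -> U l k <= tau A U k.
Proof.
move=> [U0 Uz Us] Akl; rewrite /tau (bigD1 l) //= lerDl sumr_ge0 //.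
Qed.
End Aux.
Arguments tau_ge {R n p F A U k l}.
Arguments entry_le {R n p F A U a b}.

Theorem theorem4 (R : realFieldType) (n : nat) (p : 'I_n -> R)
    (F A : rel 'I_n) :
  wf_game F A ->
  (forall i, 0 <= p i) ->
  (forall i j, ~~ F i j) ->
  (exists L : {set 'I_n}, forall i j, A i j -> (i \in L) != (j \in L)) ->
  forall i : 'I_n,
    (exists U : 'M[R]_n, nash p F A U /\ safe F A U i) ->
    forall j : 'I_n, A i j -> p j <= \sum_(k < n | A j k) p k.
Proof.
move=> wf p0 nF _ i [U [[Uadm Unash] Usafe]] j Aij.
have wf' := wf; case: wf' => [_ irrA _ _ symA].
have Aji : A j i by rewrite symA.
have ji : j != i by apply: contraTneq Aij => ->; rewrite irrA.
rewrite leNgt; apply/negP => Hlt.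
pose r := p j - \sum_(k < n | k != i) (if A j k then Num.min (U j k) (p k) else 0).
pose V : 'M[R]_n := \matrix_(a, b) (if a == j then
   (if b == i then r else if A j b then Num.min (U j b) (p b) else 0) else U a b).
have hr : p i < r.
  move: Hlt; rewrite /r big_mkcond (bigD1 i) //= Aji => Hlt.
  have hs : \sum_(k < n | k != i) (if A j k then Num.min (U j k) (p k) else 0)
     <= \sum_(k < n | k != i) (if A j k then p k else 0).
    apply: ler_sum => k _; case: ifP => // _; by rewrite ge_min lexx orbT.
  lra.
have Uadm' := Uadm; case: Uadm' => [U0 Uz Us].
have Vadm : admissible p F A V.
  split.
  - move=> a b; rewrite mxE; case: eqP => _; last exact: U0.
    case: eqP => _; first exact: le_trans (p0 i) (ltW hr).
    case: ifP => // _; rewrite le_min U0 p0 //.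
  - move=> a b H; rewrite mxE; case: (eqVneq a j) => [aj|aj]; last exact: Uz.
    subst a; case: (eqVneq b i) => [bi|bi]; first by rewrite bi Aji !orbT in H.
    by case: ifP => // Ajb; rewrite Ajb !orbT in H.
  - move=> a; case: (eqVneq a j) => [->|aj].
      rewrite (bigD1 i) //= mxE eqxx eqxx.
      rewrite (eq_bigr (fun b => if A j b then Num.min (U j b) (p b) else 0)).
        by rewrite /r subrK.
      by move=> b bi; rewrite mxE eqxx (negbTE bi).
    rewrite -Us; apply: eq_bigr => b _; by rewrite mxE (negbTE aj).
have sigV k : sigma F A V k = p k by apply: sigma_adm.
have sigU k : sigma F A U k = p k by apply: sigma_adm.
have tauVi : r <= tau A V i.
  apply: le_trans (tau_ge Vadm Aij); by rewrite mxE eqxx eqxx.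
apply: (Unash j V Vadm); first by move=> k b kj; rewrite mxE (negbTE kj).
right; split.
  split.
  - move=> k /orP [/eqP -> | Fk]; last by rewrite (negbTE (nF _ _)) in Fk.
    left; left; rewrite /safe sigV; apply: le_lt_trans Hlt.
    rewrite /tau; apply: ler_sum => l _; exact: entry_le Vadm.
  - move=> k Ajk; case: (eqVneq k i) => [->|ki].
      by left; left; rewrite /unsafe sigV; apply: lt_le_trans tauVi.
    case: (ltP (tau A U k) (sigma F A U k)) => [hs|hns]; first by right.
    left; rewrite sigU in hns.
    suff: p k <= tau A V k.
      rewrite le_eqVlt => /orP[/eqP e|h].
        by right; rewrite /precarious sigV e.
      by left; rewrite /unsafe sigV.
    case: (leP (U j k) (p k)) => h.
      apply: (le_trans hns); rewrite le_eqVlt; apply/orP; left; apply/eqP.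
      apply: eq_bigr => l _; rewrite mxE; case: (eqVneq l j) => [->|//].
      by rewrite (negbTE ki) Ajk min_l.
    have Akj : A k j by rewrite symA.
    apply: le_trans (tau_ge Vadm Akj).
    by rewrite mxE eqxx (negbTE ki) Ajk le_min lexx (ltW h).
move=> [_ hb]; case: (hb i Aji) => [[h|h]|h].
- by move: (lt_trans h Usafe); rewrite ltxx.
- by move: Usafe; rewrite /safe h ltxx.
- move: h; rewrite /safe sigV => h.
  by move: (lt_trans (le_lt_trans tauVi h) hr); rewrite ltxx.
Qed.
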